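(* Suppose that for each Polish space $E$ and each $\mu\in\mathcal P(E)$ we are given a function $\mathcal P(E)\ni\nu\mapsto\alpha(\nu|\mu)\in[0,\infty]$, such that: (1) $\alpha(\mu|\mu)=0$; (2) $\alpha(\nu|\mu)=\infty$ whenever $\nu\in\mathcal P(E)$ is not absolutely continuous with respect to $\mu$; (3) $\alpha(\nu K\,|\,\mu K)\le\alpha(\nu|\mu)$ for all Polish spaces $E,F$, all $\mu,\nu\in\mathcal P(E)$ and every kernel $K$ from $E$ to $F$. For each Polish space $E$ and $\mu\in\mathcal P(E)$ define $$\rho_\mu(f):=\sup_{\nu\in\mathcal P(E)}\left(\int_E f\,d\nu-\alpha(\nu|\mu)\right),\qquad f\in B(E).$$ Then each $\rho_\mu$ is a law invariant risk measure (on $L^\infty(E,\mu)$). Moreover, for any Polish spaces $F$ and $G$, any $\mu\in\mathcal P(F)$, $\nu\in\mathcal P(G)$, and any $f\in B(F)$, $g\in B(G)$ with $\mu\circ f^{-1}=\nu\circ g^{-1}$, we have $\rho_\mu(f)=\rho_\nu(g)$.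
   Context: For a Polish space $E$, $\mathcal P(E)$ is the set of Borel probability measures on $E$ and $B(E)$ the set of bounded Borel functions on $E$. A kernel from $E$ to $F$ (Polish spaces) is a measurable map $E\ni x\mapsto K_x\in\mathcal P(F)$, and $\mu K(\cdot):=\int_E\mu(dx)K_x(\cdot)\in\mathcal P(F)$. A risk measure on $L^\infty(E,\mu)$ is a convex functional that is monotone ($f\le g$ $\mu$-a.e. implies $\rho_\mu(f)\le\rho_\mu(g)$), cash additive ($\rho_\mu(f+c)=\rho_\mu(f)+c$ for constants $c$) and normalized ($\rho_\mu(0)=0$); law invariant means $\rho_\mu(f)=\rho_\mu(g)$ whenever $\mu\circ f^{-1}=\mu\circ g^{-1}$. *)

(* Defs.v *)
From HB Require Import structures.
From mathcomp Require Import all_boot all_order all_algebra.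
From mathcomp Require Import all_classical all_reals all_analysis.
Set Implicit Arguments.
Unset Strict Implicit.
Unset Printing Implicit Defensive.
Import Order.TTheory GRing.Theory Num.Theory.
Import numFieldNormedType.Exports.
Local Open Scope classical_set_scope.
Local Open Scope ring_scope.

(* A Polish space: a (nonempty) complete metric space which is Hausdorff
   (so the pseudometric is a genuine metric) and separable. *)
Record polish (R : realType) := Polish {
  pcarrier : completePseudoMetricType R ;
  polish_hausdorff : hausdorff_space pcarrier ;
  polish_separable : exists D : set pcarrier, countable D /\ dense D }.

Definition borel (R : realType) (E : polish R) :=
  g_sigma_algebraType (@open (pcarrier E)).

Definition bounded_borel (R : realType) (E : polish R) (f : borel E -> R) :=
  measurable_fun [set: borel E] f /\ exists M : R, forall x, `|f x| <= M.

Definition same_law (R : realType) (E F : polish R)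
  (mu : probability (borel E) R) (f : borel E -> R)
  (nu : probability (borel F) R) (g : borel F -> R) :=
  forall A : set R, measurable A ->
    mu (f @^-1` A) = nu (g @^-1` A).

(* rho_mu(f) = sup_{nu in P(E)} ( \int f dnu - alpha(nu|mu) ).
   alpha E nu mu stands for alpha(nu|mu). *)
Definition rho (R : realType)
  (alpha : forall E : polish R,
     probability (borel E) R -> probability (borel E) R -> \bar R)
  (E : polish R) (mu : probability (borel E) R) (f : borel E -> R) : \bar R :=
  ereal_sup [set ((\int[nu]_x (f x)%:E) - alpha E nu mu)%E
            | nu in [set: probability (borel E) R]].

Definition law_invariant_risk_measure (R : realType) (E : polish R)
  (mu : probability (borel E) R) (r : (borel E -> R) -> \bar R) : Prop :=
      (forall (f : borel E -> R), bounded_borel f -> r f \is a fin_num) /\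
      (forall (f g : borel E -> R) (l : R), bounded_borel f -> bounded_borel g ->
         0 <= l <= 1 ->
         (r (fun x => (l * f x + (1 - l) * g x)%R) <=
          l%:E * r f + (1 - l)%:E * r g)%E) /\
      (* monotone (w.r.t. mu-a.e. order, hence well defined on L^infty) *)
      (forall (f g : borel E -> R), bounded_borel f -> bounded_borel g ->
         {ae mu, forall x, f x <= g x} -> (r f <= r g)%E) /\
      (forall (f : borel E -> R) (c : R), bounded_borel f ->
         r (fun x => (f x + c)%R) = (r f + c%:E)%E) /\
      r (fun=> 0%R) = 0%E /\
      (forall (f g : borel E -> R), bounded_borel f -> bounded_borel g ->
         same_law mu f mu g -> r f = r g).

(* Main.v *)
Require Import Defs.
From HB Require Import structures.
From mathcomp Require Import all_boot all_order all_algebra.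
From mathcomp Require Import all_classical all_reals all_analysis.
From mathcomp Require Import measurable_realfun.
From mathcomp Require Import ring lra.
Import Order.TTheory GRing.Theory Num.Theory.
Import numFieldNormedType.Exports.
Import Num.Def.
Local Open Scope classical_set_scope.
Local Open Scope ring_scope.

Section gen.
Context d (T : measurableType d) (R : realType) (P : probability T R).

Lemma bint (f : T -> R) (M : R) : measurable_fun setT f -> (forall x, `|f x| <= M) ->
  P.-integrable setT (EFin \o f).
Proof.
move=> mf fM; apply: measurable_bounded_integrable => //.
  by rewrite (le_lt_trans (probability_le1 _ _)) ?ltry.

exists M; split; first by rewrite num_real.
by move=> y My x _; exact: le_trans (fM x) (ltW My).
Qed.

Lemma int_leM (f : T -> R) (M : R) : measurable_fun setT f -> (forall x, `|f x| <= M) ->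
  (\int[P]_x (f x)%:E <= M%:E)%E.
Proof.
move=> mf fM.
apply: (@le_trans _ _ (\int[P]_x (cst M%:E) x)%E).
  apply: le_integral => //; first exact: bint mf fM.
    by apply/integrableP; split => //; rewrite integral_cst// lte_mul_pinfty// (le_lt_trans (probability_le1 P _)) ?ltry.
  by move=> x _; rewrite lee_fin /= (le_trans (ler_norm _)).
by rewrite integral_cst// [X in (_ * X)%E](probability_setT P) mule1.
Qed.

Lemma int_geM (f : T -> R) (M : R) : measurable_fun setT f -> (forall x, `|f x| <= M) ->
  ((- M)%:E <= \int[P]_x (f x)%:E)%E.
Proof.
move=> mf fM.
apply: (@le_trans _ _ (\int[P]_x (cst (- M)%:E) x)%E).
  by rewrite integral_cst// [X in (_ * X)%E](probability_setT P) mule1.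
apply: le_integral => //; last first.
  by move=> x _; rewrite lee_fin /= lerNl (le_trans _ (fM x))// -normrN ler_norm.
  exact: bint mf fM.
by apply/integrableP; split => //; rewrite integral_cst// lte_mul_pinfty// (le_lt_trans (probability_le1 P _)) ?ltry.
Qed.

Lemma int_fin (f : T -> R) (M : R) : measurable_fun setT f -> (forall x, `|f x| <= M) ->
  (\int[P]_x (f x)%:E)%E \is a fin_num.
Proof.
move=> mf fM; move: (@int_geM f M mf fM) (@int_leM f M mf fM).
by case: (\int[P]_x (f x)%:E)%E.
Qed.

Lemma intc_int (c : R) : P.-integrable setT (fun x => c%:E).
Proof.
by apply/integrableP; split => //; rewrite integral_cst // lte_mul_pinfty // (le_lt_trans (probability_le1 P _)) ?ltry.
Qed.

Lemma int_shift (f : T -> R) (M c : R) : measurable_fun setT f -> (forall x, `|f x| <= M) ->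
  (\int[P]_x (f x + c)%:E = \int[P]_x (f x)%:E + c%:E)%E.
Proof.
move=> mf fM; under eq_integral do rewrite EFinD.
rewrite integralD //; first by rewrite integral_cst // [X in (_ * X)%E](probability_setT P) mule1.
- exact: bint mf fM.
- exact: intc_int.
Qed.

End gen.
Arguments bint {d T R} P {f M}.
Arguments int_leM {d T R} P {f M}.
Arguments int_geM {d T R} P {f M}.
Arguments int_fin {d T R} P {f M}.
Arguments int_shift {d T R} P {f M} c.

Section part.
Context d (T : measurableType d) (R : realType) (N : nat) (h : T -> 'I_N).
Hypothesis mh : forall i, measurable (h @^-1` [set i]).

Lemma meas_fin d' (U : measurableType d') (phi : 'I_N -> U) :
  measurable_fun setT (phi \o h).
Proof.
move=> _ Y mY; rewrite setTI.
have -> : (phi \o h) @^-1` Y = \bigcup_(i in [set i | Y (phi i)]) h @^-1` [set i].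
  by apply/seteqP; split => [x /= Yx|x [i /= Yi hi]] //; [exists (h x) | rewrite /= hi].
by apply: fin_bigcup_measurable => //; exact: finite_finset.
Qed.

Lemma part_sum (P : {measure set T -> \bar R}) B : measurable B ->
  (\sum_(i < N) P (B `&` h @^-1` [set i]))%E = P B.
Proof.
move=> mB; rewrite -measure_bigsetU_ord //.
- congr (P _); apply/seteqP; split.
    by elim/big_rec: _ => // i S _ IH y [[By _]|/IH].
  by move=> x Bx; rewrite (bigD1 (h x)) //=; left.
- by move=> i; exact: measurableI.
- by apply/trivIsetP => i j _ _ ij; apply/seteqP; split => // x [[_ /= hi] [_ /= hj]]; move: ij; rewrite -hi -hj eqxx.
Qed.

Lemma simple_int_ge0 (P : {measure set T -> \bar R}) (phi : 'I_N -> \bar R) :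
  (forall i, 0 <= phi i)%E ->
  (\int[P]_x phi (h x) = \sum_(i < N) phi i * P (h @^-1` [set i]))%E.
Proof.
move=> phi0.
transitivity (\int[P]_x (\sum_(i < N) phi i * (\1_(h @^-1` [set i]) x)%:E))%E.
  apply: eq_integral => x _.
  rewrite (bigD1 (h x)) //= big1 ?adde0.
    by rewrite indicE mem_set // mule1.
  by move=> i /negbTE hi; rewrite indicE memNset ?mule0 //= => /esym/eqP; rewrite hi.
rewrite ge0_integral_sum //; last 2 first.
- move=> i; apply: measurable_funeM; apply/measurable_EFinP.
  by apply: measurable_indic.
- by move=> i x _; rewrite mule_ge0 // lee_fin.
apply: eq_bigr => i _.
rewrite ge0_integralZl //.
- by rewrite integral_indic // setIT.
- by apply: measurableT_comp => //; exact: measurable_indic.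
Qed.

End part.
Arguments part_sum {d T R N h} mh P B.
Arguments simple_int_ge0 {d T R N h} mh P phi.
Arguments meas_fin {d T N h} mh {d' U} phi.

Section part2.
Context d (T : measurableType d) (R : realType) (N : nat) (h : T -> 'I_N).
Hypothesis mh : forall i, measurable (h @^-1` [set i]).


Lemma indic_int (P : probability T R) (A : set T) : measurable A ->
  P.-integrable setT (fun x => (\1_A x)%:E).
Proof.
move=> mA; apply: (@bint _ _ _ P _ 1); first exact: measurable_indic.
by move=> x; rewrite /indic; case: (_ \in _); rewrite ?normr1 ?normr0.
Qed.

Lemma simple_int_real (P : probability T R) (phi : 'I_N -> R) :
  (\int[P]_x (phi (h x))%:E = (\sum_(i < N) phi i * fine (P (h @^-1` [set i])))%:E)%E.
Proof.
transitivity (\int[P]_x (\sum_(i < N) (phi i)%:E * (\1_(h @^-1` [set i]) x)%:E))%E.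
  apply: eq_integral => x _.
  rewrite (bigD1 (h x)) //= big1 ?adde0.
    by rewrite indicE mem_set // mule1.
  by move=> i /negbTE hi; rewrite indicE memNset ?mule0 //= => /esym/eqP; rewrite hi.
rewrite integral_sum //; last first.
  move=> i; apply: integrableZl => //.
  exact: indic_int.
rewrite -sumEFin; apply: eq_bigr => i _.
rewrite integralZl //; last first.
  exact: indic_int.
rewrite integral_indic // setIT EFinM fineK //.
by rewrite ge0_fin_numE // (le_lt_trans (probability_le1 P _)) ?ltry.
Qed.

End part2.
Arguments simple_int_real {d T R N h} mh P phi.
Arguments indic_int {d T R} P {A}.

Section idx.
Context (R : realType) (M eps : R).
Hypothesis eps0 : 0 < eps.

Definition nI := truncn (2 * M / eps).
Definition idx (t : R) : 'I_(nI.+1) := inord (truncn ((t + M) / eps)).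
Definition lo (i : 'I_nI.+1) : R := i%:R * eps - M.

Lemma meas_truncn k : measurable [set s : R | truncn s = k].
Proof.
case: k => [|m].
  have -> : [set s : R | truncn s = 0%N] = [set` `]-oo, 1%:R[].
    apply/seteqP; split => s /=; rewrite in_itv /= -truncn_le_nat leqn0.
      by move=> ->.
    by move/eqP.
  exact: measurable_itv.
have -> : [set s : R | truncn s = m.+1] = [set` `[m.+1%:R, m.+2%:R[].
  apply/seteqP; split => s /=; rewrite in_itv /= -truncn_le_nat -truncn_gt_nat.
    by move=> ->; rewrite !leqnn.
  by move=> /andP[h1 h2]; apply/eqP; rewrite eqn_leq h2.
exact: measurable_itv.
Qed.

Lemma idx_meas i : measurable (idx @^-1` [set i]).
Proof.
have mu : measurable_fun setT (fun t : R => (t + M) / eps).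
  apply: measurable_funM => //; apply: measurable_funD => //.
have -> : idx @^-1` [set i] = (fun t : R => (t + M) / eps) @^-1`
    \bigcup_(k in [set k | inord k = i]) [set s : R | truncn s = k].
  apply/seteqP; split => t /=.
    by move=> hi; exists (truncn ((t + M) / eps)).
  by move=> [k /= hk ht]; rewrite /idx ht.
rewrite -[X in measurable X]setTI; apply: mu => //.
apply: bigcup_measurable => k _; exact: meas_truncn.
Qed.

Lemma idx_lo t : `|t| <= M -> lo (idx t) <= t < lo (idx t) + eps.
Proof.
move=> tM.
have u0 : 0 <= (t + M) / eps.
  apply: divr_ge0; last exact: ltW.
  by rewrite -lerBlDr sub0r; move: tM; rewrite ler_norml => /andP[].
have tM' : t <= M by move: tM; rewrite ler_norml => /andP[].
have /andP[k1 k2] := truncn_itv u0.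
have hk : (truncn ((t + M) / eps) < nI.+1)%N.
  rewrite -(ltr_nat R) (le_lt_trans k1) // (le_lt_trans _ (truncnS_gt _)) //.
  by rewrite ler_pM2r ?invr_gt0 //; lra.
rewrite /lo /idx inordK //.
move: k1 k2; set k := truncn _ => k1 k2.
rewrite ler_pdivlMr // in k1; rewrite ltr_pdivrMr // in k2.
apply/andP; split; first by rewrite lerBlDr.
rewrite -natr1 mulrDl mul1r in k2; lra.
Qed.

End idx.
Arguments idx {R}.
Arguments idx_lo {R M eps} eps0 {t}.
Arguments idx_meas {R} M eps i.
Arguments lo {R}.
Arguments nI {R}.

Section push.
Context d d' (X : measurableType d) (Y : measurableType d') (R : realType).
Variables (P : probability X R) (k : R.-pker X ~> Y).

Definition mpush (U : set Y) := (\int[P]_x k x U)%E.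

Let mpush0 : mpush set0 = 0%E.
Proof.
by rewrite /mpush (eq_integral (cst 0%E)) ?integral0// => y _; rewrite measure0.
Qed.

Let mpush_ge0 U : (0 <= mpush U)%E. Proof. exact: integral_ge0. Qed.

Let mpush_sigma_additive : semi_sigma_additive mpush.
Proof.
move=> U mU tU mUU; rewrite [X in _ --> X](_ : _ =
  \int[P]_y (\sum_(n <oo) k y (U n)))%E; last first.
  apply: eq_integral => V _.
  by apply/esym/cvg_lim => //; exact/measure_semi_sigma_additive.
apply/cvg_closeP; split.
  by apply: is_cvg_nneseries => n _ _; exact: integral_ge0.
rewrite closeE// integral_nneseries// => n.
exact: measurable_kernel.
Qed.

HB.instance Definition _ := isMeasure.Build _ _ R
  mpush mpush0 mpush_ge0 mpush_sigma_additive.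

Let mpush1 : mpush setT = 1%E.
Proof.
rewrite /mpush (eq_integral (cst 1%E)).
  by rewrite integral_cst // [X in (_ * X)%E](probability_setT P) mule1.
by move=> x _; exact: prob_kernel.
Qed.

HB.instance Definition _ := Measure_isProbability.Build _ _ R mpush mpush1.

End push.
Arguments mpush {d d' X Y R}.

Section kern.
Context (R : realType) (F G : polish R) (nu : probability (borel G) R) (N : nat)
  (h : borel F -> 'I_N) (D : 'I_N -> set (borel G)).
Hypothesis mh : forall i, measurable (h @^-1` [set i]).
Hypothesis mD : forall i, measurable (D i).

Definition Qk i (U : set (borel G)) : \bar R :=
  let _ := mD in if nu (D i) == 0%E then nu U else (nu (U `&` D i) * (fine (nu (D i)))^-1%:E)%E.

Let Qk0 i : Qk i set0 = 0%E.
Proof. by rewrite /Qk set0I measure0 mul0e; case: ifP. Qed.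

Let Qk_ge0 i U : (0 <= Qk i U)%E.
Proof.
rewrite /Qk; case: ifP => // _; apply: mule_ge0 => //.
by rewrite lee_fin invr_ge0 fine_ge0.
Qed.

Let Qk_sa i : semi_sigma_additive (Qk i).
Proof.
move=> S mS tS mUS; rewrite /Qk; case: ifPn => [_|_].
  exact: measure_semi_sigma_additive.
rewrite [X in X @ _ --> _](_ : _ = (fun n => \sum_(0 <= j < n) mrestr nu (mD i) (S j)) \*
                               cst (fine (nu (D i)))^-1%:E)%E; last first.
  by apply/funext => n; rewrite -ge0_sume_distrl.
apply: cvgeZr => //.
have := @measure_semi_sigma_additive _ _ _ (mrestr nu (mD i)) S mS tS mUS.
by [].
Qed.

HB.instance Definition _ i := isMeasure.Build _ _ R (Qk i) (Qk0 i) (Qk_ge0 i) (@Qk_sa i).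

Let Qk1 i : Qk i [set: borel G] = 1%E.
Proof.
rewrite /Qk; case: ifPn => [_|D0]; first exact: probability_setT.
rewrite setTI -[X in (X * _)%E]fineK ?ge0_fin_numE ?(le_lt_trans (probability_le1 nu (mD i))) ?ltry //.
by rewrite -EFinM mulfV // fine_eq0 // ge0_fin_numE ?(le_lt_trans (probability_le1 nu (mD i))) ?ltry.
Qed.

HB.instance Definition _ i := Measure_isProbability.Build _ _ R (Qk i) (Qk1 i).


Lemma nuD_fin i : nu (D i) \is a fin_num.
Proof. by rewrite ge0_fin_numE // (le_lt_trans (probability_le1 nu (mD i))) ?ltry. Qed.

Lemma Qk_val i B : nu (D i) != 0%E ->
  Qk i B = (nu (B `&` D i) * (fine (nu (D i)))^-1%:E)%E.
Proof.
by move=> D0; rewrite /Qk (negbTE D0).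
Qed.

Lemma Qk_mul i B : measurable B -> (Qk i B * nu (D i) = nu (B `&` D i))%E.
Proof.
move=> mB; have [D0|D0] := eqVneq (nu (D i)) 0%E.
  rewrite D0 mule0; apply/esym/eqP; rewrite -measure_le0 -D0.
  by apply: measureIr => //; exact: measurableI.
rewrite Qk_val // -muleA -[X in (_ * (_ * X))%E](fineK (nuD_fin i)) -EFinM mulVf ?mule1 //.
by rewrite fine_eq0 ?nuD_fin.
Qed.

Lemma Qk_self i : nu (D i) != 0%E -> Qk i (D i) = 1%E.
Proof.
move=> D0; rewrite Qk_val // setIid -[X in (X * _)%E](fineK (nuD_fin i)) -EFinM mulfV //.
by rewrite fine_eq0 ?nuD_fin.
Qed.

Lemma Qk_disj i j : nu (D j) != 0%E -> D i `&` D j = set0 -> Qk j (D i) = 0%E.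
Proof. by move=> D0 Dij; rewrite Qk_val // Dij measure0 mul0e. Qed.

Definition kf : borel F -> {measure set (borel G) -> \bar R} :=
  let _ := mh in fun x => Qk (h x).

Lemma kf_meas U : measurable U -> measurable_fun setT (kf ^~ U).
Proof.
move=> mU _ Y mY; rewrite setTI.
have -> : (kf ^~ U) @^-1` Y = \bigcup_(i in [set i | Y (Qk i U)]) h @^-1` [set i].
  by apply/seteqP; split => [x /= Yx|x [i /= Yi hi]] //; [exists (h x) | rewrite /kf /= hi].
by apply: fin_bigcup_measurable => //; exact: finite_finset.
Qed.

HB.instance Definition _ := isKernel.Build _ _ _ _ R kf kf_meas.

Lemma kf1 x : kf x setT = 1%E.
Proof. exact: probability_setT. Qed.

HB.instance Definition _ := Kernel_isProbability.Build _ _ _ _ R kf kf1.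


End kern.
Arguments Qk {R G} nu {N D} mD.
Arguments kf {R F G} nu {N h D} mh mD.
Arguments Qk_mul {R G} nu {N D} mD i {B}.
Arguments Qk_self {R G} nu {N D} mD {i}.
Arguments Qk_disj {R G} nu {N D} mD {i j}.

Lemma rho_le_law (R : realType)
  (alpha : forall E : polish R,
     probability (borel E) R -> probability (borel E) R -> \bar R)
  (H2 : forall (E : polish R) (mu nu : probability (borel E) R),
     ~ (nu `<< mu) -> alpha E nu mu = +oo%E)
  (H3 : forall (E F : polish R) (mu nu : probability (borel E) R)
     (K : R.-pker (borel E) ~> (borel F))
     (muK nuK : probability (borel F) R),
     (forall B : set (borel F), measurable B ->
        muK B = (\int[mu]_x K x B)%E) ->
     (forall B : set (borel F), measurable B ->
        nuK B = (\int[nu]_x K x B)%E) ->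
     (alpha F nuK muK <= alpha E nu mu)%E)
  (F G : polish R) (mu : probability (borel F) R)
  (nu : probability (borel G) R) (f : borel F -> R) (g : borel G -> R) :
  bounded_borel f -> bounded_borel g ->
  same_law mu f nu g -> (rho alpha mu f <= rho alpha nu g)%E.
Proof.
move=> [mf [Mf hf]] [mg [Mg hg]] sl.
pose M : R := `|Mf| + `|Mg|.
have fM x : `|f x| <= M.
  by rewrite (le_trans (hf x)) // /M (le_trans (ler_norm _)) // lerDl.
have gM x : `|g x| <= M.
  by rewrite (le_trans (hg x)) // /M (le_trans (ler_norm _)) // lerDr.
apply/lee_addgt0Pr => eps eps0.
apply: ge_ereal_sup => _ [nu' _ <-].
have [->|aF] := eqVneq (alpha F nu' mu) +oo%E.
  by rewrite addeNy leNye.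
have ac : nu' `<< mu.
  have [//|nac] := pselect (nu' `<< mu).
  by move: aF; rewrite H2 // eqxx.
pose A i := idx M eps @^-1` [set i].
have mA i : measurable (A i) by exact: idx_meas.
pose h x := idx M eps (f x).
pose hG y := idx M eps (g y).
have mh i : measurable (h @^-1` [set i]).
  by rewrite -[X in measurable X]setTI; exact: (mf measurableT _ (mA i)).
have mD i : measurable (hG @^-1` [set i]).
  by rewrite -[X in measurable X]setTI; exact: (mg measurableT _ (mA i)).
have sl' i : mu (h @^-1` [set i]) = nu (hG @^-1` [set i]) by exact: (sl _ (mA i)).
pose K := kf nu mh mD.
pose nuK := mpush nu' K.
have ac' := (null_content_dominatesP _ _).1 ac.
have K2 B : measurable B -> nu B = (\int[mu]_x K x B)%E.
  move=> mB.
  transitivity (\int[mu]_x (fun i => Qk nu mD i B) (h x))%E; last by [].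
  rewrite (simple_int_ge0 mh mu (fun i => Qk nu mD i B)) //.
  rewrite -(part_sum mD nu B mB); apply: eq_bigr => i _.
  by rewrite [X in (_ * X)%E]sl' Qk_mul.
have nuKD i : nuK (hG @^-1` [set i]) = nu' (h @^-1` [set i]).
  transitivity (\int[nu']_x (fun j => Qk nu mD j (hG @^-1` [set i])) (h x))%E; first by [].
  rewrite (simple_int_ge0 mh nu' (fun j => Qk nu mD j (hG @^-1` [set i]))) //.
  rewrite (bigD1 i) //= big1 ?adde0.
    have [D0|D0] := eqVneq (nu (hG @^-1` [set i])) 0%E.
      by rewrite (ac' _ (mh i)) ?mule0 //; exact: (etrans (sl' i) D0).
    by rewrite Qk_self // mul1e.
  move=> j ji.
  have [D0|D0] := eqVneq (nu (hG @^-1` [set j])) 0%E.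
    by rewrite (ac' _ (mh j)) ?mule0 //; exact: (etrans (sl' j) D0).
  rewrite Qk_disj ?mul0e //.
  by apply/seteqP; split => // y [/= hi hj]; move: ji; rewrite -hi -hj eqxx.
have HK := H3 F G mu nu' K nu nuK K2 (fun B mB => erefl).
have [L loL] : exists L, forall i, `|lo M eps i| <= L.
  exists (\sum_(i < (nI M eps).+1) `|lo M eps i|) => i.
  by rewrite (bigD1 i) //= lerDl sumr_ge0.
pose c i := fine (nu' (h @^-1` [set i])).
pose S := \sum_(i < (nI M eps).+1) lo M eps i * c i.
have gS : (S%:E <= \int[nuK]_y (g y)%:E)%E.
  have -> : S%:E = (\int[nuK]_y (lo M eps (hG y))%:E)%E.
    rewrite (simple_int_real mD nuK (lo M eps)); congr EFin; apply: eq_bigr => i _.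
    by rewrite /c; congr (_ * fine _); symmetry; exact: nuKD.
  apply: le_integral => //.
  - exact: (bint nuK (meas_fin mD (lo M eps)) (fun y => loL (hG y))).
  - exact: (bint nuK mg gM).
  - by move=> y _; rewrite lee_fin; have /andP[] := idx_lo eps0 (gM y).
have fS : (\int[nu']_x (f x)%:E <= S%:E + eps%:E)%E.
  have intl : nu'.-integrable setT (fun x => (lo M eps (h x))%:E).
    exact: (bint nu' (meas_fin mh (lo M eps)) (fun y => loL (h y))).
  have intc : nu'.-integrable setT (fun x => eps%:E).
    by apply/integrableP; split => //; rewrite integral_cst // lte_mul_pinfty // (le_lt_trans (probability_le1 nu' _)) ?ltry.
  have -> : (S%:E + eps%:E = \int[nu']_x ((lo M eps (h x))%:E + eps%:E))%E.
    rewrite integralD // (simple_int_real mh nu' (lo M eps)) integral_cst //.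
    by rewrite [X in (_ * X)%E](probability_setT nu') mule1.
  apply: le_integral => //.
  - exact: (bint nu' mf fM).
  - exact: integrableD.
  - move=> x _; rewrite -EFinD lee_fin; have /andP[_ /ltW] := idx_lo eps0 (fM x).
    by [].
apply: (@le_trans _ _ ((\int[nuK]_y (g y)%:E - alpha G nuK nu) + eps%:E)%E).
  rewrite addeAC; apply: leeB => //.
  exact: (le_trans fS (leeD2r _ gS)).
apply: leeD2r; apply: ereal_sup_ubound; by exists nuK.
Qed.

Lemma fin_between (R : realType) (x : \bar R) (a b : R) :
  (a%:E <= x)%E -> (x <= b%:E)%E -> x \is a fin_num.
Proof. by case: x. Qed.

Theorem theorem2p7 (R : realType)
  (alpha : forall E : polish R,
     probability (borel E) R -> probability (borel E) R -> \bar R)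
  (alpha_ge0 : forall (E : polish R) (mu nu : probability (borel E) R),
     (0 <= alpha E nu mu)%E)
  (H1 : forall (E : polish R) (mu : probability (borel E) R),
     alpha E mu mu = 0%E)
  (H2 : forall (E : polish R) (mu nu : probability (borel E) R),
     ~ (nu `<< mu) -> alpha E nu mu = +oo%E)
  (H3 : forall (E F : polish R) (mu nu : probability (borel E) R)
     (K : R.-pker (borel E) ~> (borel F))
     (muK nuK : probability (borel F) R),
     (forall B : set (borel F), measurable B ->
        muK B = (\int[mu]_x K x B)%E) ->
     (forall B : set (borel F), measurable B ->
        nuK B = (\int[nu]_x K x B)%E) ->
     (alpha F nuK muK <= alpha E nu mu)%E) :
  (forall (E : polish R) (mu : probability (borel E) R),
     law_invariant_risk_measure mu (rho alpha mu)) /\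
  (forall (F G : polish R) (mu : probability (borel F) R)
     (nu : probability (borel G) R) (f : borel F -> R) (g : borel G -> R),
     bounded_borel f -> bounded_borel g ->
     same_law mu f nu g -> rho alpha mu f = rho alpha nu g).
Proof.
have law : forall (F G : polish R) (mu : probability (borel F) R)
     (nu : probability (borel G) R) (f : borel F -> R) (g : borel G -> R),
     bounded_borel f -> bounded_borel g ->
     same_law mu f nu g -> rho alpha mu f = rho alpha nu g.
  move=> F G mu nu f g bf bg sl; apply/le_anti/andP; split.
    exact: rho_le_law.
  by apply: rho_le_law => // A mA; rewrite sl.
split => //.
move=> E mu.
have ub (f : borel E -> R) (nu : probability (borel E) R) :
    (\int[nu]_x (f x)%:E - alpha E nu mu <= rho alpha mu f)%E.
  by apply: ereal_sup_ubound; exists nu.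
have rhofin (f : borel E -> R) : bounded_borel f -> rho alpha mu f \is a fin_num.
  move=> [mf [M fM]]; apply: (@fin_between _ _ (- M) M).
    apply: le_trans (ub f mu); rewrite H1 sube0.
    exact: int_geM mf fM.
  apply: ge_ereal_sup => _ [nu _ <-].
  apply: (@le_trans _ _ (\int[nu]_x (f x)%:E - 0)%E).
    by apply: leeB => //.
  by rewrite sube0; exact: int_leM mf fM.
split; first exact: rhofin.
split.
  move=> f g l bf bg /andP[l0 l1].
  have [mf [Mf hf]] := bf; have [mg [Mg hg]] := bg.
  have rf := rhofin f bf; have rg := rhofin g bg.
  rewrite -(fineK rf) -(fineK rg).
  apply: ge_ereal_sup => _ [nu _ <-].
  have [->|aF] := eqVneq (alpha E nu mu) +oo%E; first by rewrite addeNy leNye.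
  have afin : alpha E nu mu \is a fin_num by rewrite ge0_fin_numE // ltey.
  have intf := int_fin nu mf hf; have intg := int_fin nu mg hg.
  have e1 := ub f nu; have e2 := ub g nu.
  rewrite -(fineK rf) -(fineK afin) -(fineK intf) -EFinB lee_fin in e1.
  rewrite -(fineK rg) -(fineK afin) -(fineK intg) -EFinB lee_fin in e2.
  have -> : (\int[nu]_x (l * f x + (1 - l) * g x)%:E = l%:E * \int[nu]_x (f x)%:E + (1 - l)%:E * \int[nu]_x (g x)%:E)%E.
    under eq_integral do rewrite EFinD EFinM EFinM.
    rewrite integralD //.
    - by rewrite !integralZl //; [exact: bint mg hg | exact: bint mf hf].
    - by apply: integrableZl => //; exact: bint mf hf.
    - by apply: integrableZl => //; exact: bint mg hg.
  rewrite -(fineK afin) -(fineK intf) -(fineK intg) -!EFinM -!EFinD lee_fin.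
  have l1' : 0 <= 1 - l by rewrite subr_ge0.
  have := ler_wpM2l l0 e1; have := ler_wpM2l l1' e2.
  lra.
split.
  move=> f g bf bg fg.
  have [mf [Mf hf]] := bf; have [mg [Mg hg]] := bg.
  pose M : R := `|Mf| + `|Mg|.
  have fM x : `|f x| <= M.
    by rewrite (le_trans (hf x)) // /M (le_trans (ler_norm _)) // lerDl.
  have gM x : `|g x| <= M.
    by rewrite (le_trans (hg x)) // /M (le_trans (ler_norm _)) // lerDr.
  apply: ge_ereal_sup => _ [nu _ <-].
  have [->|aF] := eqVneq (alpha E nu mu) +oo%E; first by rewrite addeNy leNye.
  have ac : nu `<< mu.
    have [//|nac] := pselect (nu `<< mu).
    by move: aF; rewrite H2 // eqxx.
  have ac' := (null_content_dominatesP _ _).1 ac.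
  apply: le_trans (ub g nu); apply: leeB => //.
  have : (\int[nu]_x (f x + M)%:E <= \int[nu]_x (g x + M)%:E)%E.
    apply: ae_ge0_le_integral => //.
    - by move=> x _; rewrite lee_fin -lerBlDr sub0r; move: (fM x); rewrite ler_norml => /andP[].
    - by apply/measurable_EFinP; apply: measurable_funD.
    - by move=> x _; rewrite lee_fin -lerBlDr sub0r; move: (gM x); rewrite ler_norml => /andP[].
    - by apply/measurable_EFinP; apply: measurable_funD.
    - move: fg => [N [mN muN sub]]; exists N; split => //; first exact: ac'.
      move=> x /= hx; apply: sub => /= fgx; apply: hx => _.
      by rewrite lee_fin lerD2r.
  by rewrite (int_shift nu M mf fM) (int_shift nu M mg gM) leeD2rE.
split.
  move=> f c bf; have [mf [M fM]] := bf.
  apply/le_anti/andP; split.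
    apply: ge_ereal_sup => _ [nu _ <-].
    rewrite (int_shift nu c mf fM) addeAC; apply: leeD2r; exact: ub.
  rewrite -leeBrDr //; apply: ge_ereal_sup => _ [nu _ <-].
  rewrite leeBrDr // addeAC -(int_shift nu c mf fM).
  exact: (ub (fun x => f x + c) nu).
split.
  apply/le_anti/andP; split.
    apply: ge_ereal_sup => _ [nu _ <-].
    by rewrite integral_cst // mul0e sub0e oppe_le0.
  apply: le_trans (ub (fun=> 0) mu).
  by rewrite H1 integral_cst // mul0e sube0.
by move=> f g bf bg sl; apply: law.
Qed.
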